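(* Let $R>0$, $s(z):=R^2-|z_1|^2-\dots-|z_n|^2$, $d\in\mathbb N^*$ and $y\in\mathcal H_d$. If $M_d(y)\succeq0$ and $M_{d-1}(sy)=0$, then $\operatorname{Tr}(M_d(y))\le y_{0,0}\sum_{l=0}^dR^{2l}$.
   Context: For $\alpha\in\mathbb N^n$, $|\alpha|=\sum\alpha_i$. $\mathcal H_d$ is the set of complex families $y=(y_{\alpha,\beta})_{|\alpha|,|\beta|\le d}$ with $\overline{y_{\alpha,\beta}}=y_{\beta,\alpha}$. For a real-valued complex polynomial $\varphi(z)=\sum_{|\gamma|,|\delta|\le l}\varphi_{\gamma,\delta}\bar z^\gamma z^\delta$ ($\overline{\varphi_{\gamma,\delta}}=\varphi_{\delta,\gamma}$) and an integer $e$ with $e+l\le d$, $M_e(\varphi y)$ is the Hermitian matrix indexed by $|\alpha|,|\beta|\le e$ with entries $\sum_{|\gamma|,|\delta|\le l}\varphi_{\gamma,\delta}y_{\alpha+\gamma,\beta+\delta}$; $M_d(y):=M_d(1\cdot y)$, i.e. entries $y_{\alpha,\beta}$. *)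

(* Defs.v *)
From HB Require Import structures.
From mathcomp Require Import all_boot all_order all_algebra.
Set Implicit Arguments. Unset Strict Implicit. Unset Printing Implicit Defensive.
Import Order.TTheory GRing.Theory Num.Theory.
Local Open Scope ring_scope.

Definition midx (n : nat) := {ffun 'I_n -> nat}.
Definition mdeg (n : nat) (a : midx n) : nat := (\sum_(i < n) a i)%N.
Definition madd (n : nat) (a b : midx n) : midx n := [ffun i => (a i + b i)%N].

Definition Mon (n d : nat) : finType :=
  {f : {ffun 'I_n -> 'I_d.+1} | (\sum_(i < n) (f i : nat) <= d)%N}.
Definition mi (n d : nat) (a : Mon n d) : midx n := [ffun i => (val a i : nat)].

(* A family y = (y_{alpha,beta}) is modelled as a function on pairs of
   multi-indices; only the values with |alpha|,|beta| <= d matter. *)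
Definition hermitian_family (C : numClosedFieldType) (n d : nat)
  (y : midx n -> midx n -> C) : Prop :=
  forall a b : Mon n d, y (mi b) (mi a) = (y (mi a) (mi b))^*.

(* Localizing matrix M_e(phi y), phi of bidegree <= l; M_d(y) = M_d(1 y). *)
Definition loc_mx (C : numClosedFieldType) (n e l : nat)
  (phi : midx n -> midx n -> C) (y : midx n -> midx n -> C)
  : 'M[C]_(#|{: Mon n e}|) :=
  \matrix_(i, j)
    \sum_(g : Mon n l) \sum_(h : Mon n l)
       phi (mi g) (mi h) *
       y (madd (mi (enum_val i)) (mi g)) (madd (mi (enum_val j)) (mi h)).

Definition mom_mx (C : numClosedFieldType) (n d : nat)
  (y : midx n -> midx n -> C) : 'M[C]_(#|{: Mon n d}|) :=
  \matrix_(i, j) y (mi (enum_val i)) (mi (enum_val j)).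

(* Coefficients of s(z) = R^2 - sum_i conj(z_i) z_i, a polynomial of bidegree 1:
   s_{0,0} = R^2, s_{e_i,e_i} = -1, all others 0. *)
Definition s_coef (C : numClosedFieldType) (n : nat) (R : C)
  (g h : midx n) : C :=
  if g == h then
    (if mdeg g == 0%N then R ^+ 2 else if mdeg g == 1%N then -1 else 0)
  else 0.

Definition psd_mx (C : numClosedFieldType) (N : nat) (A : 'M[C]_N) : Prop :=
  (map_mx (fun x : C => x^*) A)^T = A /\
  forall v : 'cV[C]_N, 0 <= ((map_mx (fun x : C => x^*) v)^T *m A *m v) 0 0.

Definition midx0 (n : nat) : midx n := [ffun => 0%N].

(* Main.v *)
Require Import Defs.
From HB Require Import structures.
From mathcomp Require Import all_boot all_order all_algebra zify.
Set Implicit Arguments. Unset Strict Implicit.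
Import Order.TTheory GRing.Theory Num.Theory.
Local Open Scope ring_scope.

Lemma mi_inj n d : injective (@mi n d).
Proof.
move=> a b /ffunP H; apply: val_inj; apply/ffunP=> i; apply: ord_inj.
by move: (H i); rewrite !ffunE.
Qed.

Lemma le_mdeg n (m : midx n) i : (m i <= mdeg m)%N.
Proof. by rewrite /mdeg (bigD1 i) //= leq_addr. Qed.

Lemma mon0_proof n d : (\sum_(i < n) (([ffun=> ord0] : {ffun 'I_n -> 'I_d.+1}) i : nat) <= d)%N.
Proof. by rewrite big1 // => i _; rewrite ffunE. Qed.

Definition toMon n d (m : midx n) : Mon n d :=
  insubd (exist _ [ffun=> ord0] (mon0_proof n d) : {f : {ffun 'I_n -> 'I_d.+1} | (\sum_(i < n) (f i : nat) <= d)%N})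
     [ffun i => inord (m i) : 'I_d.+1].

Lemma toMonK n d (m : midx n) : (mdeg m <= d)%N -> mi (toMon d m) = m.
Proof.
move=> Hm.
have Hi : forall i, (m i <= d)%N by move=> i; exact: leq_trans (le_mdeg m i) Hm.
rewrite /mi /toMon val_insubd.
have -> : (\sum_(i < n) (([ffun i => inord (m i)] : {ffun 'I_n -> 'I_d.+1}) i : nat) <= d)%N.
  by rewrite (eq_bigr m) // => i _; rewrite ffunE inordK // ltnS.
by apply/ffunP=> i; rewrite !ffunE inordK // ltnS.
Qed.

Lemma mdeg_mi n d (b : Mon n d) : (mdeg (mi b) <= d)%N.
Proof.
rewrite /mdeg (eq_bigr (fun i => val b i : nat)); first exact: (valP b).
by move=> i _; rewrite ffunE.
Qed.

Lemma diag_ge0 (C : numClosedFieldType) n d (y : midx n -> midx n -> C) :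
  psd_mx (mom_mx d y) -> forall b : Mon n d, 0 <= y (mi b) (mi b).
Proof.
case=> _ H b.
have := H (delta_mx (enum_rank b) 0).
have -> : map_mx (fun x : C => x^*) (delta_mx (enum_rank b) 0 : 'cV[C]_ _) = delta_mx (enum_rank b) 0.
  by apply/matrixP=> i j; rewrite !mxE; case: (_ && _); rewrite ?conjC1 ?conjC0.
rewrite trmx_delta -rowE -colE !mxE enum_rankK //.
Qed.

Lemma tr_mom (C : numClosedFieldType) n d (y : midx n -> midx n -> C) :
  \tr (mom_mx d y) = \sum_(b : Mon n d) y (mi b) (mi b).
Proof.
rewrite /mxtrace (reindex (@enum_rank _)) /=; last first.
  by exists (@enum_val _ _) => x _; rewrite ?enum_rankK ?enum_valK.
by apply: eq_bigr => b _; rewrite mxE enum_rankK.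
Qed.

Lemma mdeg0 n (m : midx n) : mdeg m = 0%N -> m = midx0 n.
Proof.
move=> H; apply/ffunP=> i; rewrite ffunE; apply/eqP; rewrite -leqn0 -H; exact: le_mdeg.
Qed.

Lemma mdeg_midx0 n : mdeg (midx0 n) = 0%N.
Proof. by rewrite /mdeg big1 // => i _; rewrite ffunE. Qed.

Lemma madd0 n (m : midx n) : madd m (midx0 n) = m.
Proof. by apply/ffunP=> i; rewrite !ffunE addn0. Qed.

Lemma mdeg_madd n (a b : midx n) : mdeg (madd a b) = (mdeg a + mdeg b)%N.
Proof. by rewrite /mdeg -big_split; apply: eq_bigr => i _; rewrite ffunE. Qed.

Lemma loc_eq (C : numClosedFieldType) n (R : C) e (y : midx n -> midx n -> C) :
  loc_mx e 1 (s_coef R) y = 0 -> forall a : Mon n e,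
  R ^+ 2 * y (mi a) (mi a) =
  \sum_(g : Mon n 1 | mdeg (mi g) == 1%N) y (madd (mi a) (mi g)) (madd (mi a) (mi g)).
Proof.
move=> H a.
move/matrixP: H => /(_ (enum_rank a) (enum_rank a)).
rewrite /= !mxE enum_rankK => H0.
rewrite (eq_bigr (fun g : Mon n 1 => s_coef R (mi g) (mi g) *
   y (madd (mi a) (mi g)) (madd (mi a) (mi g)))) in H0; last first.
  move=> g _; rewrite (bigD1 g) //= big1 ?addr0 //.
  move=> h hg; rewrite /s_coef.
  case: eqP => [/mi_inj E|_]; last by rewrite mul0r.
  by rewrite E eqxx in hg.
move: H0; rewrite /s_coef; under eq_bigr => g _ do rewrite eqxx.
set g0 := toMon 1 (midx0 n).
have Hg0 : mi g0 = midx0 n by rewrite toMonK // mdeg_midx0.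
rewrite (bigD1 g0) //= Hg0 mdeg_midx0 eqxx madd0.
move/eqP; rewrite addr_eq0 => /eqP ->.
rewrite -sumrN big_mkcond [RHS]big_mkcond /=; apply: eq_bigr => g _.
case: eqP => [->|ng]; first by rewrite Hg0 mdeg_midx0.
case: eqP => [E|_]; first by case: ng; apply: mi_inj; rewrite Hg0 (mdeg0 E).
by case: (_ == 1%N); rewrite ?mulN1r ?opprK ?mul0r ?oppr0.
Qed.

Definition T (C : numClosedFieldType) n d (y : midx n -> midx n -> C) k :=
  \sum_(b : Mon n d | mdeg (mi b) == k) y (mi b) (mi b).

Lemma step (C : numClosedFieldType) n (R : C) d (y : midx n -> midx n -> C) (k : nat) :
  psd_mx (mom_mx d y) -> loc_mx d.-1 1 (s_coef R) y = 0 -> (k < d)%N ->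
  T d y k.+1 <= R ^+ 2 * T d y k.
Proof.
move=> Hpsd Hloc Hk.
rewrite /T mulr_sumr.
rewrite [X in _ <= X](eq_bigr (fun b : Mon n d => \sum_(g : Mon n 1 | mdeg (mi g) == 1%N)
   y (madd (mi b) (mi g)) (madd (mi b) (mi g)))); last first.
  move=> b /eqP Hb.
  have := loc_eq Hloc (toMon d.-1 (mi b)); rewrite toMonK //; rewrite Hb; lia.
rewrite pair_big /=.
set phi := fun p : Mon n d * Mon n 1 => toMon d (madd (mi p.1) (mi p.2)).
have Hphi : forall p, (mdeg (mi p.1) == k) && (mdeg (mi p.2) == 1%N) ->
    mi (phi p) = madd (mi p.1) (mi p.2).
  move=> p /andP[/eqP h1 /eqP h2]; rewrite toMonK // mdeg_madd h1 h2; lia.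
rewrite (eq_bigr (fun p => y (mi (phi p)) (mi (phi p)))); last by move=> p Hp; rewrite Hphi.
rewrite (partition_big phi (fun b => mdeg (mi b) == k.+1)) /=; last first.
  move=> p Hp; rewrite Hphi // mdeg_madd; case/andP: Hp => /eqP -> /eqP ->; by rewrite addn1.
apply: ler_sum => b /eqP Hb.
case: (pickP (fun i => (0 < mi b i)%N)) => [i Hi | H0]; last first.
  exfalso; move: Hb; rewrite /mdeg big1 // => j _; move: (H0 j) => /=; by case: (mi b j).
set ei : midx n := [ffun j => nat_of_bool (j == i)].
set m := [ffun j => (mi b j - ei j)%N] : midx n.
set a := toMon d m.
set g := toMon 1 ei.
have Hei : mdeg ei = 1%N.
  rewrite /mdeg (bigD1 i) //= big1 ?ffunE ?eqxx // => j /negbTE; rewrite ffunE => ->; done.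
have Hsplit : madd m ei = mi b.
  apply/ffunP=> j; rewrite !ffunE; case: (eqVneq j i) => [->|_]; last by rewrite subn0 addn0.
  by move: Hi; rewrite ffunE => Hi; rewrite subnK.
have Hdega : mdeg m = k by move: Hb; rewrite -Hsplit mdeg_madd Hei addn1 => -[].
have Ha : mi a = m by rewrite toMonK // Hdega; lia.
have Hg : mi g = ei by rewrite toMonK // Hei.
have Hp : (mdeg (mi a) == k) && (mdeg (mi g) == 1%N) by rewrite Ha Hg Hdega Hei !eqxx.
have Hphib : phi (a,g) = b by apply: mi_inj; rewrite Hphi // Ha Hg Hsplit.
rewrite (bigD1 (a,g)) /=; last by rewrite Hp Hphib eqxx.
rewrite Hphib lerDl; apply: sumr_ge0 => p _; exact: diag_ge0.
Qed.

Lemma T0 (C : numClosedFieldType) n d (y : midx n -> midx n -> C) :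
  T d y 0 = y (midx0 n) (midx0 n).
Proof.
rewrite /T (bigD1 (toMon d (midx0 n))) /=; last by rewrite toMonK ?mdeg_midx0.
rewrite toMonK ?mdeg_midx0 // big1 ?addr0 // => b /andP[/eqP Hb nb].
by case/eqP: nb; apply: mi_inj; rewrite toMonK ?mdeg_midx0 // (mdeg0 Hb).
Qed.

Lemma Tbound (C : numClosedFieldType) n (R : C) d (y : midx n -> midx n -> C) (k : nat) :
  0 < R -> psd_mx (mom_mx d y) -> loc_mx d.-1 1 (s_coef R) y = 0 -> (k <= d)%N ->
  T d y k <= R ^+ (2 * k) * T d y 0.
Proof.
move=> HR Hpsd Hloc; elim: k => [|k IH] Hk; first by rewrite muln0 expr0 mul1r.
apply: le_trans (step Hpsd Hloc Hk) _.
rewrite mulnS exprD -mulrA; apply: ler_wpM2l; first by rewrite exprn_ge0 // ltW.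
exact: IH (ltnW Hk).
Qed.

Lemma tr_T (C : numClosedFieldType) n d (y : midx n -> midx n -> C) :
  \tr (mom_mx d y) = \sum_(k < d.+1) T d y k.
Proof.
rewrite tr_mom (partition_big (fun b : Mon n d => inord (mdeg (mi b)) : 'I_d.+1) predT) //=.
apply: eq_bigr => k _; rewrite /T; apply: eq_bigl => b.
apply/eqP/eqP => [<-|->]; last by apply: ord_inj; rewrite inordK // ltnS; exact: mdeg_mi.
by rewrite inordK // ltnS; exact: mdeg_mi.
Qed.

Unset Implicit Arguments.
Set Strict Implicit.

Theorem mainTheorem8 (C : numClosedFieldType) (n : nat) (R : C) (d : nat)
  (y : midx n -> midx n -> C) :
  0 < R -> (0 < d)%N ->
  hermitian_family d y ->
  psd_mx (mom_mx d y) ->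
  loc_mx d.-1 1 (s_coef R) y = 0 ->
  \tr (mom_mx d y) <= y (midx0 n) (midx0 n) * \sum_(l < d.+1) R ^+ (2 * l).
Proof.
move=> HR Hd _ Hpsd Hloc.
rewrite tr_T mulr_sumr; apply: ler_sum => k _.
rewrite mulrC -(T0 d y); apply: Tbound => //; rewrite -ltnS; exact: ltn_ord.
Qed.
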